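(* Let $p,q$ be coprime positive integers with $\frac pq<\frac12$. Then $P_{0,\frac pq}\triangleleft P_{1,\frac pq}$, i.e. $H_2(M_0)>H_2(M_1)$ and $H_2(m_0)>H_2(m_1)$, where $M_r,m_r$ denote the points of absolute maximum and absolute minimum of $P_{r,\frac pq}$.
   Context: $H_2:[0,1]\to[0,1]$ is $H_2(x)=3x$ on $I_0=[0,\frac13]$, $2-3x$ on $I_1=[\frac13,\frac23]$, $3x-2$ on $I_2=[\frac23,1]$. For coprime $p,q$ with $0<\frac pq<\frac12$ and $r\in\{0,1,\dots,q-2p\}$, $\Gamma_{r,\frac pq}$ is the bimodal over-twist pattern whose cyclic permutation $\Pi_{r,\frac pq}$ of $\{1,\dots,q\}$ (action on the points of the cycle labelled $x_1<\dots<x_q$) is: $j\mapsto j+p$ for $1\le j\le r$; $j\mapsto q-j+r+1$ for $r+1\le j\le r+p$; $j\mapsto 2p-j+r+1$ for $r+p+1\le j\le r+2p$; $j\mapsto j-p$ for $r+2p+1\le j\le q$. $P_{r,\frac pq}$ denotes the cycle of $H_2$ exhibiting $\Gamma_{r,\frac pq}$ singled out by the location of its extremal points as follows (the paper asserts it is unique): for $r=0$ and $r=q-2p$ its points $M_r,m_r$ lie in $I_1$, and for $1\le r\le q-2p-1$, $M_r\in I_1$ and $m_r\in I_2$. Here the point of absolute maximum $M_r$ (resp. absolute minimum $m_r$) of a cycle $P$ is the point of $P$ whose image under $H_2$ is the largest (resp. smallest) point of $P$. $P_{r_2,\frac pq}\triangleleft P_{r_1,\frac pq}$ means $H_2(M_{r_2})>H_2(M_{r_1})$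 and $H_2(m_{r_2})>H_2(m_{r_1})$. *)

(* Defs.v *)
From Stdlib Require Import Reals Lra Lia Arith.
Open Scope R_scope.

Definition H2 (x : R) : R :=
  if Rle_dec x (1/3) then 3 * x
  else if Rle_dec x (2/3) then 2 - 3 * x
  else 3 * x - 2.

Definition in_I0 (x : R) : Prop := 0 <= x <= 1/3.
Definition in_I1 (x : R) : Prop := 1/3 <= x <= 2/3.
Definition in_I2 (x : R) : Prop := 2/3 <= x <= 1.

(** The cyclic permutation Pi_{r,p/q} of {1,...,q} (values outside the
    range 1..q are irrelevant). *)
Definition Pi (r p q j : nat) : nat :=
  if (j <=? r)%nat then (j + p)%nat
  else if (j <=? r + p)%nat then (q + r + 1 - j)%nat
  else if (j <=? r + 2 * p)%nat then (2 * p + r + 1 - j)%nat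
  else (j - p)%nat.

(** x_1 < ... < x_q (given as x : nat -> R on indices 1..q) are the points
    of a cycle of H_2 in [0,1] exhibiting the pattern Pi_{r,p/q}:
    H_2(x_j) = x_{Pi(j)}. *)
Definition exhibits (r p q : nat) (x : nat -> R) : Prop :=
  (forall j, (1 <= j <= q)%nat -> 0 <= x j <= 1) /\
  (forall j, (1 <= j < q)%nat -> x j < x (S j)) /\
  (forall j, (1 <= j <= q)%nat -> H2 (x j) = x (Pi r p q j)).

(** j is the index of the point of absolute maximum (its image is the
    largest point x_q), resp. absolute minimum (its image is x_1). *)
Definition is_max_index (r p q j : nat) : Prop :=
  (1 <= j <= q)%nat /\ Pi r p q j = q.
Definition is_min_index (r p q j : nat) : Prop :=
  (1 <= j <= q)%nat /\ Pi r p q j = 1%nat.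

Definition is_P (r p q : nat) (x : nat -> R) : Prop :=
  exhibits r p q x /\
  (forall j, is_max_index r p q j -> in_I1 (x j)) /\
  (forall j, is_min_index r p q j ->
     if (orb (r =? 0) (r =? q - 2 * p))%nat then in_I1 (x j) else in_I2 (x j)).

(* Main.v *)
Require Import Defs.
From Stdlib Require Import Reals Lra Lia Arith.

Open Scope nat_scope.
Fixpoint it (f : nat -> nat) (n a : nat) : nat :=
  match n with O => a | S n => f (it f n a) end.

Lemma it_add f n m a : it f (n + m) a = it f n (it f m a).
Proof. induction n; simpl; congruence. Qed.

Definition reach f a b := exists n, it f n a = b.

Lemma reach_trans f a b c : reach f a b -> reach f b c -> reach f a c.
Proof. intros [n Hn] [m Hm]. exists (m + n). rewrite it_add, Hn; auto. Qed.

Lemma reach_refl f a : reach f a a.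
Proof. exists 0; reflexivity. Qed.

Lemma reach_step f a : reach f a (f a).
Proof. exists 1; reflexivity. Qed.

Ltac piq := unfold Pi; repeat match goal with |- context[Nat.leb ?a ?b] => destruct (Nat.leb_spec a b) end; lia.

Section Cyc.
Variables p q : nat.
Hypothesis Hp : 0 < p.
Hypothesis Hq : 2 * p < q.
Hypothesis Hg : Nat.gcd p q = 1.
Let f := Pi 0 p q.

Lemma down i k : p + 1 <= k -> k + i * p <= q -> reach f (k + i * p) k.
Proof.
  intros H1. induction i as [|i IH]; intros H2.
  - rewrite Nat.mul_0_l, Nat.add_0_r. apply reach_refl.
  - eapply reach_trans; [apply reach_step|].
    replace (f (k + S i * p)) with (k + i * p) by (unfold f; piq).
    apply IH; lia.
Qed.

Lemma retT t : q - p + 1 <= t <= q ->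
  reach f t (q - p + 1 + (t - p - 1) mod p).
Proof.
  intros Ht.
  set (j := p + 1 + (t - p - 1) mod p).
  assert (Hm : (t - p - 1) mod p < p) by (apply Nat.mod_upper_bound; lia).
  assert (Hd := Nat.div_mod_eq (t - p - 1) p).
  assert (Htj : t = j + ((t - p - 1) / p) * p) by (unfold j; lia).
  eapply reach_trans.
  { rewrite Htj at 1. apply down; unfold j; lia. }
  eapply reach_trans; [apply reach_step|].
  eapply reach_trans; [apply reach_step|].
  replace (f (f j)) with (q - p + 1 + (t - p - 1) mod p).
  apply reach_refl.
  unfold f, j. remember ((t - p - 1) mod p) as u.
  replace (Pi 0 p q (p + 1 + u)) with (p - u) by piq.
  piq.
Qed.

Lemma allT n : reach f q (q - p + 1 + (p - 1 + n * q) mod p).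
Proof.
  induction n as [|n IH].
  - simpl. rewrite Nat.add_0_r, Nat.mod_small by lia.
    replace (q - p + 1 + (p - 1)) with q by lia. apply reach_refl.
  - eapply reach_trans; [apply IH|].
    assert (Hm : (p - 1 + n * q) mod p < p) by (apply Nat.mod_upper_bound; lia).
    eapply reach_trans; [apply retT; lia|].
    replace ((q - p + 1 + (p - 1 + n * q) mod p - p - 1) mod p)
      with ((p - 1 + S n * q) mod p). apply reach_refl.
    replace (q - p + 1 + (p - 1 + n * q) mod p - p - 1)
      with ((q - 2 * p + (p - 1 + n * q) mod p)) by lia.
    rewrite <- (Nat.Div0.mod_add (q - 2 * p + _) 2 p).
    replace (q - 2 * p + (p - 1 + n * q) mod p + 2 * p) with
      (q + (p - 1 + n * q) mod p) by lia.
    rewrite Nat.Div0.add_mod_idemp_r.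
    f_equal. rewrite Nat.mul_succ_l. lia.
Qed.

Lemma reachT t : q - p + 1 <= t <= q -> reach f q t.
Proof.
  intros Ht.
  destruct (Nat.gcd_bezout_pos q p) as [a [b Hab]]; [lia|].
  rewrite Nat.gcd_comm, Hg in Hab.
  set (v := t - (q - p + 1)).
  replace t with (q - p + 1 + (p - 1 + (a * (v + 1)) * q) mod p).
  apply allT.
  replace (p - 1 + a * (v + 1) * q) with (v + (1 + b * (v + 1)) * p).
  2:{ replace (a * (v + 1) * q) with ((a * q) * (v + 1)) by ring.
      rewrite Hab. 
      assert (E : p - 1 + (1 + b * p) * (v + 1) = (p - 1 + 1) + v + b * p * (v + 1)) by ring.
      rewrite E. replace (p - 1 + 1) with p by lia. ring. }
  rewrite Nat.Div0.mod_add, Nat.mod_small by (unfold v; lia).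
  unfold v; lia.
Qed.

Lemma cyclic k : 1 <= k <= q -> reach f q k.
Proof.
  intros Hk.
  assert (Hhigh : forall k, p + 1 <= k <= q -> reach f q k).
  { intros k0 Hk0.
    assert (Hd := Nat.div_mod_eq (q - k0) p).
    assert (Hm : (q - k0) mod p < p) by (apply Nat.mod_upper_bound; lia).
    eapply reach_trans; [apply (reachT (k0 + ((q - k0) / p) * p)); nia|].
    apply down; nia. }
  destruct (Nat.le_gt_cases (p + 1) k).
  - apply Hhigh; lia.
  - eapply reach_trans; [apply (Hhigh (2 * p + 1 - k)); lia|].
    replace k with (f (2 * p + 1 - k)) at 2 by (unfold f; piq).
    apply reach_step.
Qed.
End Cyc.
Close Scope nat_scope.
Open Scope R_scope.


Lemma H2_I0 t : t <= 1/3 -> H2 t = 3 * t.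
Proof. intros; unfold H2; destruct Rle_dec; try destruct Rle_dec; lra. Qed.
Lemma H2_I1 t : 1/3 <= t <= 2/3 -> H2 t = 2 - 3 * t.
Proof. intros; unfold H2; destruct Rle_dec; try destruct Rle_dec; lra. Qed.
Lemma H2_I2 t : 2/3 <= t -> H2 t = 3 * t - 2.
Proof. intros; unfold H2; destruct Rle_dec; try destruct Rle_dec; lra. Qed.

Lemma mono (x : nat -> R) q : (forall j, (1 <= j < q)%nat -> x j < x (S j)) ->
  forall a b, (1 <= a)%nat -> (a < b)%nat -> (b <= q)%nat -> x a < x b.
Proof.
  intros H a b Ha Hab Hb. induction b as [|b IH]; [lia|].
  destruct (Nat.eq_dec a b) as [->|Hne].
  - apply H; lia.
  - apply Rlt_trans with (x b); [apply IH; lia| apply H; lia].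
Qed.

Lemma monole (x : nat -> R) q : (forall j, (1 <= j < q)%nat -> x j < x (S j)) ->
  forall a b, (1 <= a)%nat -> (a <= b)%nat -> (b <= q)%nat -> x a <= x b.
Proof.
  intros H a b Ha Hab Hb. destruct (Nat.eq_dec a b) as [->|]; [lra|].
  left; apply (mono x q H); lia.
Qed.

Lemma pow3_ge n : INR (S n) <= 3 ^ n.
Proof.
  induction n. simpl; lra.
  change (3 ^ S n) with (3 * 3 ^ n). rewrite S_INR.
  assert (0 <= INR n) by apply pos_INR.
  rewrite S_INR in IHn. rewrite S_INR. lra.
Qed.

Lemma Pi_range r p q j : (r <= q - 2 * p)%nat -> (0 < p)%nat -> (2 * p < q)%nat ->
  (1 <= j <= q)%nat -> (1 <= Pi r p q j <= q)%nat.
Proof. intros; piq. Qed.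

Theorem mainTheorem13 (p q : nat) (x y : nat -> R) :
  (0 < p)%nat -> Nat.gcd p q = 1%nat -> (2 * p < q)%nat ->
  is_P 0 p q x -> is_P 1 p q y ->
  (forall j0 j1, is_max_index 0 p q j0 -> is_max_index 1 p q j1 ->
     H2 (x j0) > H2 (y j1)) /\
  (forall j0 j1, is_min_index 0 p q j0 -> is_min_index 1 p q j1 ->
     H2 (x j0) > H2 (y j1)).
Proof.
  intros Hp Hg Hq [[Hx01 [Hxinc HxH]] [HxM Hxm]] [[Hy01 [Hyinc HyH]] [HyM Hym]].
  assert (xM : in_I1 (x 1%nat)) by (apply HxM; split; [lia|piq]).
  assert (xm : in_I1 (x (2 * p)%nat)).
  { specialize (Hxm (2 * p)%nat). simpl in Hxm. apply Hxm; split; [lia|piq]. }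
  assert (yM : in_I1 (y 2%nat)) by (apply HyM; split; [lia|piq]).
  assert (ym := Hym (2 * p + 1)%nat). clear HxM Hxm HyM Hym.
  unfold in_I1, in_I2 in *.
  assert (Xmono := mono x q Hxinc). assert (Xle := monole x q Hxinc).
  assert (Ymono := mono y q Hyinc). assert (Yle := monole y q Hyinc).
  assert (HX : forall k, (1 <= k <= q)%nat -> H2 (x k) = x (Pi 0 p q k)) by exact HxH.
  assert (FX1 : forall k, (1 <= k <= 2 * p)%nat -> 1/3 <= x k <= 2/3).
  { intros k Hk. split.
    - apply Rle_trans with (x 1%nat); [lra|apply Xle; lia].
    - apply Rle_trans with (x (2 * p)%nat); [apply Xle; lia|lra]. }
  assert (EX_a : forall k, (1 <= k <= p)%nat -> x (q + 1 - k)%nat = 2 - 3 * x k).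
  { intros k Hk. rewrite <- H2_I1 by (apply FX1; lia).
    rewrite HX by lia. f_equal. piq. }
  assert (EX_b : forall k, (p + 1 <= k <= 2 * p)%nat -> x (2 * p + 1 - k)%nat = 2 - 3 * x k).
  { intros k Hk. rewrite <- H2_I1 by (apply FX1; lia).
    rewrite HX by lia. f_equal. piq. }
  assert (FX2 : 2/3 < x (2 * p + 1)%nat).
  { destruct (Rlt_or_le (2/3) (x (2 * p + 1)%nat)) as [|Hle]; [assumption|].
    exfalso.
    assert (E : H2 (x (2 * p + 1)%nat) = 2 - 3 * x (2 * p + 1)%nat).
    { apply H2_I1. split; [|lra].
      apply Rle_trans with (x 1%nat); [lra|apply Xle; lia]. }
    rewrite HX in E by lia.
    replace (Pi 0 p q (2 * p + 1)) with (p + 1)%nat in E by piq.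
    assert (x (2 * p)%nat < x (2 * p + 1)%nat) by (apply Xmono; lia).
    assert (x 1%nat < x (p + 1)%nat) by (apply Xmono; lia).
    assert (E1 := EX_b (2 * p)%nat ltac:(lia)).
    replace (2 * p + 1 - 2 * p)%nat with 1%nat in E1 by lia.
    lra. }
  assert (EX_c : forall k, (2 * p + 1 <= k <= q)%nat -> x (k - p)%nat = 3 * x k - 2).
  { intros k Hk. rewrite <- H2_I2.
    2:{ destruct (Nat.eq_dec k (2 * p + 1)) as [->|]; [lra|].
        assert (x (2 * p + 1)%nat < x k) by (apply Xmono; lia). lra. }
    rewrite HX by lia. f_equal. piq. }
  assert (HY : forall k, (1 <= k <= q)%nat -> H2 (y k) = y (Pi 1 p q k)) by exact HyH.
  assert (FY0 : y 1%nat < 1/3).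
  { destruct (Rlt_or_le (y 1%nat) (1/3)) as [|Hle]; [assumption|]. exfalso.
    assert (y 1%nat < y 2%nat) by (apply Ymono; lia).
    assert (E1 : H2 (y 1%nat) = 2 - 3 * y 1%nat) by (apply H2_I1; lra).
    assert (E2 : H2 (y 2%nat) = 2 - 3 * y 2%nat) by (apply H2_I1; lra).
    rewrite HY in E1, E2 by lia.
    replace (Pi 1 p q 1) with (p + 1)%nat in E1 by piq.
    replace (Pi 1 p q 2) with q in E2 by piq.
    assert (y (p + 1)%nat <= y q) by (apply Yle; lia). lra. }
  assert (EY_1 : y (p + 1)%nat = 3 * y 1%nat).
  { rewrite <- H2_I0 by lra. rewrite HY by lia. f_equal. piq. }
  assert (EY_m : y 1%nat = H2 (y (2 * p + 1)%nat)).
  { rewrite HY by lia. f_equal. piq. }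
  assert (Y2p : y (2 * p)%nat <= 2/3 /\ ((q = 2 * p + 1)%nat -> y q <= 2/3) /\
                ((2 * p + 1 < q)%nat -> 2/3 <= y (2 * p + 1)%nat)).
  { destruct (Nat.eq_dec q (2 * p + 1)) as [Eq|Ne].
    - rewrite Eq in ym. replace (1 =? 2 * p + 1 - 2 * p)%nat with true in ym
        by (symmetry; apply Nat.eqb_eq; lia).
      rewrite Bool.orb_true_r in ym. specialize (ym ltac:(split; [lia|piq])).
      assert (y (2 * p)%nat < y (2 * p + 1)%nat) by (apply Ymono; lia).
      split; [lra|]. split; [intros; rewrite Eq; lra| intros; exfalso; lia].
    - replace (1 =? q - 2 * p)%nat with false in ym
        by (symmetry; apply Nat.eqb_neq; lia).
      cbn [orb Nat.eqb] in ym. specialize (ym ltac:(split; [lia|piq])).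
      split; [|split; [intros; exfalso; lia| intros; lra]].
      destruct (Rle_or_lt (y (2 * p)%nat) (2/3)) as [|Hlt]; [assumption|]. exfalso.
      assert (y (2 * p)%nat < y (2 * p + 1)%nat) by (apply Ymono; lia).
      assert (E : H2 (y (2 * p)%nat) = 3 * y (2 * p)%nat - 2) by (apply H2_I2; lra).
      rewrite H2_I2 in EY_m by lra.
      rewrite HY in E by lia.
      assert (y 1%nat < y (Pi 1 p q (2 * p))).
      { apply Ymono; try lia; piq. }
      lra. }
  destruct Y2p as [Y2p [Yq1 Yq2]].
  assert (FY1 : forall k, (2 <= k <= 2 * p)%nat -> 1/3 <= y k <= 2/3).
  { intros k Hk. split.
    - apply Rle_trans with (y 2%nat); [lra|apply Yle; lia].
    - apply Rle_trans with (y (2 * p)%nat); [apply Yle; lia|lra]. }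
  assert (EY_a : forall k, (2 <= k <= p + 1)%nat -> y (q + 2 - k)%nat = 2 - 3 * y k).
  { intros k Hk. rewrite <- H2_I1 by (apply FY1; lia).
    rewrite HY by lia. f_equal. piq. }
  assert (EY_b : forall k, (p + 2 <= k <= 2 * p)%nat -> y (2 * p + 2 - k)%nat = 2 - 3 * y k).
  { intros k Hk. rewrite <- H2_I1 by (apply FY1; lia).
    rewrite HY by lia. f_equal. piq. }
  assert (EY_c : forall k, (2 * p + 2 <= k <= q)%nat -> y (k - p)%nat = 3 * y k - 2).
  { intros k Hk. rewrite <- H2_I2.
    2:{ assert (y (2 * p + 1)%nat < y k) by (apply Ymono; lia).
        specialize (Yq2 ltac:(lia)). lra. }
    rewrite HY by lia. f_equal. piq. }
  assert (B1 : y 1%nat < x 1%nat) by lra.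
  assert (x1lt : x 1%nat < x (p + 1)%nat) by (apply Xmono; lia).
  assert (B2p1 : y (2 * p + 1)%nat < x (2 * p + 1)%nat).
  { destruct (Nat.eq_dec q (2 * p + 1)) as [Eq|Ne].
    - specialize (Yq1 Eq). rewrite Eq in Yq1. lra.
    - specialize (Yq2 ltac:(lia)).
      rewrite H2_I2 in EY_m by lra.
      assert (E := EX_c (2 * p + 1)%nat ltac:(lia)).
      replace (2 * p + 1 - p)%nat with (p + 1)%nat in E by lia. lra. }
  assert (A2p : x (2 * p)%nat < y (2 * p + 1)%nat).
  { assert (E1 := EX_b (2 * p)%nat ltac:(lia)).
    replace (2 * p + 1 - 2 * p)%nat with 1%nat in E1 by lia.
    destruct (Nat.eq_dec q (2 * p + 1)) as [Eq|Ne].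
    - specialize (Yq1 Eq). rewrite <- Eq in EY_m |- *.
      rewrite H2_I1 in EY_m.
      2:{ split; [|lra]. apply Rle_trans with (y 2%nat); [lra|apply Yle; lia]. }
      lra.
    - specialize (Yq2 ltac:(lia)). lra. }
  assert (x2p1le : x (2 * p + 1)%nat <= x (2 * p + 1)%nat) by lra.
  assert (P : forall n, (forall k, (1 <= k <= q)%nat -> 3 ^ n * (y k - x k) <= 1) /\
                        (forall k, (1 <= k)%nat -> (k + 1 <= q)%nat -> 3 ^ n * (x k - y (k + 1)%nat) <= 1)).
  { induction n as [|n [IHB IHA]].
    - simpl. split; intros k Hk; [|intros Hk2];
        [assert (Hx0 := Hx01 k Hk); assert (Hy0 := Hy01 k Hk)
        |assert (Hx0 := Hx01 k ltac:(lia)); assert (Hy0 := Hy01 (k + 1)%nat ltac:(lia))]; lra.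
    - assert (H3 : 0 < 3 ^ n) by (apply pow_lt; lra).
      change (3 ^ S n) with (3 * 3 ^ n).
      split.
      + intros k Hk.
        destruct (Nat.eq_dec k 1) as [->|N1]; [nra|].
        destruct (Nat.eq_dec k (2 * p + 1)) as [->|N2]; [nra|].
        destruct (le_lt_dec k p) as [L1|L1].
        { specialize (IHA (q + 1 - k)%nat ltac:(lia) ltac:(lia)).
          replace (q + 1 - k + 1)%nat with (q + 2 - k)%nat in IHA by lia.
          rewrite EX_a, EY_a in IHA by lia. nra. }
        destruct (Nat.eq_dec k (p + 1)) as [->|N3].
        { specialize (IHA p ltac:(lia) ltac:(lia)).
          assert (E1 := EX_b (p + 1)%nat ltac:(lia)).
          replace (2 * p + 1 - (p + 1))%nat with p in E1 by lia.
          assert (E2 := EY_a (p + 1)%nat ltac:(lia)).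
          assert (y (p + 1)%nat <= y (q + 2 - (p + 1))%nat) by (apply Yle; lia).
          nra. }
        destruct (le_lt_dec k (2 * p)) as [L2|L2].
        { specialize (IHA (2 * p + 1 - k)%nat ltac:(lia) ltac:(lia)).
          replace (2 * p + 1 - k + 1)%nat with (2 * p + 2 - k)%nat in IHA by lia.
          rewrite EX_b, EY_b in IHA by lia. nra. }
        { specialize (IHB (k - p)%nat ltac:(lia)).
          rewrite EX_c, EY_c in IHB by lia. nra. }
      + intros k Hk Hk2.
        destruct (Nat.eq_dec k (2 * p)) as [->|N1]; [nra|].
        destruct (le_lt_dec k p) as [L1|L1].
        { specialize (IHB (q + 1 - k)%nat ltac:(lia)).
          replace (q + 1 - k)%nat with (q + 2 - (k + 1))%nat in IHB at 1 by lia.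
          rewrite EX_a, EY_a in IHB by lia. nra. }
        destruct (le_lt_dec k (2 * p)) as [L2|L2].
        { specialize (IHB (2 * p + 1 - k)%nat ltac:(lia)).
          replace (2 * p + 1 - k)%nat with (2 * p + 2 - (k + 1))%nat in IHB at 1 by lia.
          rewrite EX_b, EY_b in IHB by lia. nra. }
        { specialize (IHA (k - p)%nat ltac:(lia) ltac:(lia)).
          replace (k - p + 1)%nat with (k + 1 - p)%nat in IHA by lia.
          rewrite EX_c, EY_c in IHA by lia. nra. } }
  assert (Arch : forall v, (forall n, 3 ^ n * v <= 1) -> v <= 0).
  { intros v Hv. destruct (Rle_or_lt v 0) as [|Hlt]; [assumption|]. exfalso.
    destruct (archimed_cor1 v Hlt) as [N [HN HN0]].
    assert (HNp : 0 < INR N) by (apply lt_0_INR; lia).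
    destruct N as [|N]; [lia|].
    specialize (Hv N). assert (G := pow3_ge N).
    assert (INR (S N) * v <= 1) by nra.
    apply (Rmult_lt_compat_l (INR (S N))) in HN; [|lra].
    rewrite Rinv_r in HN by lra. lra. }
  assert (WB : forall k, (1 <= k <= q)%nat -> y k <= x k).
  { intros k Hk. assert (y k - x k <= 0); [|lra].
    apply Arch. intros n. apply (proj1 (P n)); lia. }
  assert (Sq : y q < x q).
  { destruct (Rle_lt_or_eq_dec _ _ (WB q ltac:(lia))) as [|Eq]; [assumption|].
    exfalso.
    assert (Mem : forall n, (1 <= it (Pi 0 p q) n q <= q)%nat /\
                 exists m, (1 <= m <= q)%nat /\ x (it (Pi 0 p q) n q) = y m).
    { induction n as [|n [IHr [m [Hm Hxm]]]].
      - simpl. split; [lia|]. exists q; split; [lia|]. congruence.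
      - simpl. split; [apply Pi_range; lia|].
        exists (Pi 1 p q m). split; [apply Pi_range; lia|].
        rewrite <- HX, <- HY by lia. congruence. }
    assert (All : forall k, (1 <= k <= q)%nat -> exists m, (1 <= m <= q)%nat /\ x k = y m).
    { intros k Hk. destruct (cyclic p q Hp Hq Hg k Hk) as [n Hn].
      destruct (Mem n) as [_ Hm]. rewrite Hn in Hm. exact Hm. }
    assert (Desc : forall i, (i < q)%nat -> x (q - i)%nat = y (q - i)%nat).
    { induction i as [|i IH]; intros Hi.
      - rewrite Nat.sub_0_r. lra.
      - specialize (IH ltac:(lia)).
        destruct (All (q - S i)%nat ltac:(lia)) as [m [Hm Hxm]].
        assert (xlt : x (q - S i)%nat < x (q - i)%nat) by (apply Xmono; lia).
        assert (wb := WB (q - S i)%nat ltac:(lia)).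
        destruct (lt_eq_lt_dec m (q - S i)) as [[Lt|Eq2]|Gt].
        + assert (y m < y (q - S i)%nat) by (apply Ymono; lia). lra.
        + subst m. exact Hxm.
        + assert (y (q - i)%nat <= y m) by (apply Yle; lia). lra. }
    specialize (Desc (q - 1)%nat ltac:(lia)).
    replace (q - (q - 1))%nat with 1%nat in Desc by lia. lra. }
  split.
  - intros j0 j1 [Hj0 Ej0] [Hj1 Ej1].
    assert (j0 = 1%nat) by (revert Ej0; piq).
    assert (j1 = 2%nat) by (revert Ej1; piq). subst j0 j1.
    rewrite HX, HY by lia. rewrite Ej0, Ej1. lra.
  - intros j0 j1 [Hj0 Ej0] [Hj1 Ej1].
    rewrite HX, HY by lia. rewrite Ej0, Ej1. lra.
Qed.
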